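(* A poset is a p-morphic image of an $n$-comb (for some $n$) if and only if it is a broken $m$-comb for some $m$.
   Context: A poset $P$ is an $n$-comb if $P=\{x_1,\dots,x_n\}\sqcup\{y_1,\dots,y_n\}$ with order given by: for each $z\in P$, $y_i\le z$ iff $y_i=z$; and $x_i\le z$ iff ($z=x_j$ with $i\le j$) or ($z=y_j$ with $i\le j$). (So $x_1<\dots<x_n$ is a chain and each $x_i$ lies below $y_j$ for $j\ge i$.) A broken $n$-comb is a subposet $Q\subseteq P$ of an $n$-comb $P$ with $\{x_1,\dots,x_n\}\subseteq Q$, with the induced order. A p-morphism $f:P\to Q$ is an order-preserving map such that whenever $f(x)\le y$ there is $x'\ge x$ with $f(x')=y$; $Q$ is a p-morphic image of $P$ if there is a surjective p-morphism. *)

(* Defs.v *)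
From mathcomp Require Import all_boot all_order.
Set Implicit Arguments. Unset Strict Implicit. Unset Printing Implicit Defensive.
Import Order.TTheory.

(* The n-comb: carrier 'I_n + 'I_n, with inl i = x_(i+1) and inr i = y_(i+1). *)
Definition comb (n : nat) : finType := ('I_n + 'I_n)%type.

Definition comb_le (n : nat) (a b : comb n) : bool :=
  match a, b with
  | inr i, inr j => i == j
  | inr _, inl _ => false
  | inl i, inl j => (i <= j)%N
  | inl i, inr j => (i <= j)%N
  end.

Definition pmorphism (A B : Type) (leA : A -> A -> bool) (leB : B -> B -> bool)
  (f : A -> B) : Prop :=
  (forall x y, leA x y -> leB (f x) (f y)) /\
  (forall x y, leB (f x) y -> exists2 x', leA x x' & f x' = y).

Definition pmorphic_image_of_comb (d : Order.disp_t) (T : porderType d) (n : nat) : Prop :=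
  exists f : comb n -> T,
    pmorphism (@comb_le n) (fun u v : T => (u <= v)%O) f /\ (forall t : T, exists z, f z = t).

Definition is_broken_comb (d : Order.disp_t) (T : porderType d) (m : nat) : Prop :=
  exists S : {set comb m},
    (forall i : 'I_m, (inl i : comb m) \in S) /\
    exists f : T -> comb m,
      injective f /\
      (forall z : comb m, z \in S <-> exists x, f x = z) /\
      (forall x y : T, (x <= y)%O <-> comb_le (f x) (f y)).

(* Main.v *)
Require Import Defs.
From mathcomp Require Import all_boot all_order.
Set Implicit Arguments. Unset Strict Implicit. Unset Printing Implicit Defensive.
Import Order.TTheory.

Lemma comb_le_trans n (a b c : comb n) : comb_le a b -> comb_le b c -> comb_le a c.
Proof.
case: a => [i|i]; case: b => [j|j]; case: c => [k|k] //=.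
- exact: leq_trans.
- exact: leq_trans.
- by move=> H /eqP <-.
- by move=> /eqP ->.
Qed.

Lemma comb_le_refl n (a : comb n) : comb_le a a.
Proof. by case: a => i /=. Qed.

Lemma fin_choice (A : finType) (B : choiceType) (P : A -> B -> bool) :
  (forall a, exists b, P a b) -> exists f : A -> B, forall a, P a (f a).
Proof. move=> H; exists (fun a => xchoose (H a)) => a; exact: xchooseP. Qed.

Lemma lastP m (j : 'I_m) : (m.-1 < m)%N.
Proof. by case: m j => [|m] [j Hj]. Qed.

Definition hmap m (S : {set comb m}) (z : comb m) : comb m :=
  match z with
  | inl i => inl i
  | inr j => if (inr j : comb m) \in S then inr j else
      match [pick k : 'I_m | (j <= k)%N && ((inr k : comb m) \in S)] with
      | Some k => inr k
      | None => inl (Ordinal (lastP j))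
      end
  end.

Section H.
Variables (m : nat) (S : {set comb m}).
Hypothesis HS : forall i : 'I_m, (inl i : comb m) \in S.

Lemma hmap_in z : hmap S z \in S.
Proof.
case: z => [i|j] /=; first exact: HS.
case: ifP => // _; case: pickP => [k /andP[]|] //.
Qed.

Lemma hmap_id z : z \in S -> hmap S z = z.
Proof. by case: z => [i|j] //= ->. Qed.

Lemma hmap_mono a b : comb_le a b -> comb_le (hmap S a) (hmap S b).
Proof.
case: a => [i|i]; case: b => [j|j] //=; last by move/eqP->; apply: comb_le_refl.
move=> Hij; case: ifP => //= _; case: pickP => [k /andP[Hk _]|_] /=.
  exact: leq_trans Hk.
by case: j Hij => j Hj /= Hij; rewrite -ltnS prednK ?(leq_ltn_trans _ Hj) // (leq_trans Hij).
Qed.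

Lemma hmap_back a w : comb_le (hmap S a) w -> w \in S ->
  exists2 x', comb_le a x' & hmap S x' = w.
Proof.
case: a => [i|j] /=.
  move=> Hle wS; exists w; last exact: hmap_id.
  by [].
case: ifP => [jS|jnS].
  by case: w => // k /eqP <- _; exists (inr j : comb m) => //=; rewrite jS.
move=> Hle wS; exists (inr j : comb m); first by rewrite /= eqxx.
rewrite /= jnS; move: Hle; case: pickP => [k /andP[Hk kS]|none].
  by case: w wS => // k' _ /eqP <-.
case: w wS => [k|k] wS /= Hle.
  have ek : k = Ordinal (lastP j).
    apply/val_inj => /=; apply/eqP; rewrite eqn_leq Hle andbT; case: k {Hle wS} => k /= Hk.
    by rewrite -ltnS prednK // (leq_ltn_trans _ Hk).
  by rewrite ek.
exfalso; move: (none k) => /=; rewrite wS andbT.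
have -> : (j <= k)%N.
  by case: j {jnS none} => j /= Hj; rewrite (leq_trans _ Hle) // -ltnS prednK // (leq_ltn_trans _ Hj).
by [].
Qed.
End H.

Lemma broken_to_image d (T : porderType d) m :
  is_broken_comb T m -> pmorphic_image_of_comb T m.
Proof.
case=> S [HS [g [ginj [gS gle]]]].
have ex : forall z : comb m, exists t : T, g t == hmap S z.
  by move=> z; have /gS [t <-] := hmap_in HS z; exists t.
have [f Hf] := @fin_choice (comb m) T (fun z t => g t == hmap S z) ex.
exists f; split; [split|].
- move=> x y Hxy; apply/gle; rewrite !(eqP (Hf _)); exact: hmap_mono.
- move=> x t /gle; rewrite (eqP (Hf x)) => H.
  have tS : g t \in S by apply/gS; exists t.
  have [x' Hx' Hh] := hmap_back H tS.
  by exists x' => //; apply: ginj; rewrite (eqP (Hf x')).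
- move=> t; have tS: g t \in S by apply/gS; exists t.
  by exists (g t); apply: ginj; rewrite (eqP (Hf _)) hmap_id.
Qed.

Section Inj.
Variables (d : Order.disp_t) (T : porderType d) (n : nat) (f : comb n -> T).
Hypothesis Hpm : pmorphism (@comb_le n) (fun u v : T => (u <= v)%O) f.
Hypothesis Hsurj : forall t : T, exists z, f z = t.
Hypothesis Hinj : forall a b, f (inl a) = f (inl b) -> a = b.

Definition code (t : T) (z : comb n) : bool :=
  match z with
  | inl a => f (inl a) == t
  | inr j => [&& f (inr j) == t, ~~ [exists a, f (inl a) == t] &
               [forall j', (f (inr j') == t) ==> (j' <= j)%N]]
  end.

Lemma code_f t z : code t z -> f z = t.
Proof. by case: z => [a /eqP|j /and3P[/eqP]]. Qed.

Lemma maxl j t : (f (inr j) <= t)%O -> t = f (inr j).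
Proof. by case: Hpm => _ /(_ _ _) H /H [[k|k] //= /eqP <-]. Qed.

Lemma code_uniq t z z' : code t z -> code t z' -> z = z'.
Proof.
case: z => [a|j]; case: z' => [b|k] /=.
- by move=> /eqP <- /eqP H; rewrite (Hinj H).
- by move=> /eqP <- /and3P[_ /existsP []]; exists a.
- by move=> /and3P[_ /negP H _] /eqP E; case: H; apply/existsP; exists b; rewrite E.
move=> /and3P[/eqP Hj _ /forallP Mj] /and3P[/eqP Hk _ /forallP Mk].
congr inr; apply/val_inj/eqP; rewrite eqn_leq.
by rewrite (implyP (Mj k)) ?Hk ?eqxx // (implyP (Mk j)) ?Hj ?eqxx.
Qed.

Lemma code_ex t : exists z, code t z.
Proof.
have [/existsP [a /eqP Ha]|na] := boolP [exists a, f (inl a) == t].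
  by exists (inl a); rewrite /= Ha.
have [[a|j0] Hz] := Hsurj t.
  by case/existsP: na; exists a; rewrite Hz.
have P0 : (fun j => f (inr j) == t) j0 by rewrite /= Hz.
case: (@arg_maxnP _ j0 (fun j => f (inr j) == t) (fun j : 'I_n => nat_of_ord j) P0) => j /eqP Hj Mj.
exists (inr j); rewrite /= Hj eqxx na /=.
by apply/forallP => j'; apply/implyP => Hj'; exact: Mj.
Qed.

Definition gcode (t : T) : comb n := xchoose (code_ex t).

Lemma gcodeP t : code t (gcode t).
Proof. exact: xchooseP. Qed.

Lemma image_to_broken : is_broken_comb T n.
Proof.
exists [set z | code (f z) z]; split.
  by move=> i; rewrite inE /= eqxx.
exists gcode; split; [|split].
- move=> x y E; rewrite -(code_f (gcodeP x)) -(code_f (gcodeP y)); by rewrite E.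
- move=> z; rewrite inE; split.
    by move=> Hz; exists (f z); apply: code_uniq (gcodeP _) Hz.
  by case=> x <-; rewrite (code_f (gcodeP x)); exact: gcodeP.
move=> x y.
have cx := gcodeP x; have cy := gcodeP y.
have fx := code_f cx; have fy := code_f cy.
case: Hpm => Hmono Hback.
move: cx cy fx fy; case: (gcode x) => [a|j]; case: (gcode y) => [b|k] cx cy fx fy /=.
- split; last by move=> H; rewrite -fx -fy; exact: (Hmono (inl a) (inl b)).
  move=> Hle; rewrite leqNgt; apply/negP => ba.
  have H2 : (f (inl b) <= f (inl a))%O by apply: (Hmono (inl b) (inl a)); exact: ltnW.
  have := Hinj (le_anti _ : f (inl a) = f (inl b)).
  by rewrite fx fy Hle -fy -fx H2 => /(_ isT) E; move: ba; rewrite E ltnn.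
- split; last by move=> H; rewrite -fx -fy; exact: (Hmono (inl a) (inr k)).
  rewrite -fx => Hle; have [[c|c] Hc Hfc] := Hback _ _ Hle.
    by case/and3P: cy => _ /existsP []; exists c; rewrite Hfc.
  case/and3P: cy => _ _ /forallP /(_ c) /implyP M.
  by apply: leq_trans Hc (M _); rewrite Hfc.
- split=> // Hle; rewrite -fx in Hle; move: (maxl Hle) => E'.
  by case/and3P: cx => _ /negP []; apply/existsP; exists b; rewrite fy E' fx.
- split.
    rewrite -fx => /maxl E; have Exy : y = x by rewrite E fx.
    by rewrite Exy in cy; case: (code_uniq cx cy) => ->.
  by move/eqP => E; rewrite -fx -fy E.
Qed.
End Inj.

Definition ecomb n (a : 'I_n.+1) (z : comb n) : comb n.+1 :=
  match z with inl i => inl (lift a i) | inr i => inr (lift a i) end.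
Definition idx n (z : comb n) : 'I_n := match z with inl i => i | inr i => i end.

Lemma ecomb_le n (a : 'I_n.+1) x y : comb_le (ecomb a x) (ecomb a y) = comb_le x y.
Proof.
case: x => i; case: y => j //=; rewrite ?leq_bump2 //.
by rewrite (inj_eq (@lift_inj _ a)).
Qed.


Lemma ecomb_onto n (a : 'I_n.+1) z : idx z != a -> exists w, ecomb a w = z.
Proof.
case: z => i /= ia; case: (unliftP a i) ia => [j ->|->]; rewrite ?eqxx //.
- by move=> _; exists (inl j).
- by move=> _; exists (inr j).
Qed.

Lemma idx_le n (z z' : comb n) : comb_le z z' -> (idx z <= idx z')%N.
Proof. by case: z => i; case: z' => j //= /eqP ->. Qed.

Section Red.
Variables (d : Order.disp_t) (T : porderType d) (n : nat) (f : comb n.+1 -> T).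
Hypothesis Hpm : pmorphism (@comb_le n.+1) (fun u v : T => (u <= v)%O) f.
Hypothesis Hsurj : forall t : T, exists z, f z = t.
Variables (a b : 'I_n.+1).
Hypothesis ab : (a < b)%N.
Hypothesis fab : f (inl a) = f (inl b).

Lemma reach t : (f (inl b) <= t)%O ->
  exists2 w, comb_le (inl b) (ecomb a w) & f (ecomb a w) = t.
Proof.
case: Hpm => _ Hback /Hback [x' Hx' <-].
have : idx x' != a.
  by apply/negP => /eqP E; move: (idx_le Hx'); rewrite E /= leqNgt ab.
by case/ecomb_onto => w E; exists w; rewrite E.
Qed.

Lemma red_pm : pmorphism (@comb_le n) (fun u v : T => (u <= v)%O) (fun z => f (ecomb a z)).
Proof.
case: Hpm => Hmono Hback; split.
  by move=> x y H; apply: Hmono; rewrite ecomb_le.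
move=> c t /Hback [x' Hx' <-].
have [xa|xa] := boolP (idx x' != a).
  by case/ecomb_onto: xa => w E; exists w; [move: Hx'; rewrite -E ecomb_le | rewrite E].
move: xa; rewrite negbK => /eqP xa.
have Hl : (f (inl b) <= f x')%O.
  by rewrite -fab; apply: Hmono; case: x' Hx' xa => i _ /= ->.
have [w Hw Efw] := reach Hl; exists w => //; rewrite -(ecomb_le a).
apply: comb_le_trans Hw; move: Hx' xa {Hl Efw}.
case: c => i; case: x' => j /=.
- by move=> H E; have ab' := ab; rewrite -E in ab'; apply: ltnW; apply: leq_ltn_trans ab'.
- by move=> H E; have ab' := ab; rewrite -E in ab'; apply: ltnW; apply: leq_ltn_trans ab'.
- by [].
- by move=> /eqP <- E; move: (neq_lift a i); rewrite E eqxx.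
Qed.

Lemma red_surj t : exists z, f (ecomb a z) = t.
Proof.
have [z <-] := Hsurj t.
have [za|za] := boolP (idx z != a).
  by case/ecomb_onto: za => w E; exists w; rewrite E.
move: za; rewrite negbK => /eqP za.
have Hl : (f (inl b) <= f z)%O.
  by case: Hpm => Hmono _; rewrite -fab; apply: Hmono; case: z za => i /= ->.
by have [w _ Efw] := reach Hl; exists w.
Qed.
End Red.

Lemma reduce d (T : porderType d) n (f : comb n -> T) :
  pmorphism (@comb_le n) (fun u v : T => (u <= v)%O) f ->
  (forall t : T, exists z, f z = t) ->
  exists n' (f' : comb n' -> T),
    [/\ pmorphism (@comb_le n') (fun u v : T => (u <= v)%O) f',
        (forall t : T, exists z, f' z = t) &
        (forall a b, f' (inl a) = f' (inl b) -> a = b)].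
Proof.
elim: n f => [|n IH] f pm sf.
  by exists 0, f; split=> // [[]].
have [inj|ninj] := boolP [forall a, forall b, (f (inl a) == f (inl b)) ==> (a == b)].
  exists n.+1, f; split => // a b E.
  by move/forallP/(_ a)/forallP/(_ b)/implyP: inj; rewrite E eqxx => /(_ isT)/eqP.
have [a [b [ab E]]] : exists a b : 'I_n.+1, (a < b)%N /\ f (inl a) = f (inl b).
  move/forallPn: ninj => [a /forallPn [b]]; rewrite negb_imply => /andP [/eqP E nab].
  case: (ltngtP a b) => [lt|gt|eq].
  - by exists a, b.
  - by exists b, a.
  - by case/negP: nab; apply/eqP/val_inj.
exact: (IH (fun z => f (ecomb a z)) (red_pm pm ab E) (red_surj pm sf ab E)).
Qed.

Theorem mainTheorem8 (d : Order.disp_t) (T : porderType d) :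
  (exists n : nat, pmorphic_image_of_comb T n) <->
  (exists m : nat, is_broken_comb T m).
Proof.
split.
- case=> n [f [pm sf]]; have [n' [f' [pm' sf' inj']]] := reduce pm sf.
  by exists n'; exact: (image_to_broken pm' sf' inj').
- by case=> m H; exists m; exact: broken_to_image.
Qed.
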